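(* Let $\{\varphi_n\}_{n\ge1}$ be an orthonormal system on $[0,1]$ and let $\{d_n\}$ be a sequence of real numbers with $d_n=O\!\left(\frac{\sqrt{n}}{\log^2(n+1)}\right)$. For $a=\{a_n\}\in\ell_2$ put $Q_n(d,a,x)=\sum_{k=1}^{n} d_k a_k \log k\,\varphi_k(x)$ and $B_n(d,a)=\max_{1\le i<n}\left|\int_0^{i/n}Q_n(d,a,x)\,dx\right|$. Suppose that for every $a\in\ell_2$, $B_n(d,a)=O(1)$ as $n\to\infty$. Then for every $f\in BV$, $$\sum_{k=1}^{\infty} d_k^2\, C_k^2(f)\,\log^2 k<+\infty,$$ where $C_k(f)=\int_0^1 f(x)\varphi_k(x)\,dx$.
   Context: $BV$ denotes the class of (finite-valued) functions of bounded variation on $[0,1]$. An orthonormal system on $[0,1]$ is a sequence of functions orthonormal in $L_2(0,1)$. $\log$ denotes the logarithm (so $\log 1=0$). *)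

(* Defs.v *)
From HB Require Import structures.
From mathcomp Require Import all_boot all_order all_algebra.
From mathcomp Require Import all_classical all_reals all_analysis.
Set Implicit Arguments. Unset Strict Implicit. Unset Printing Implicit Defensive.
Import Order.TTheory GRing.Theory Num.Theory.
Import numFieldNormedType.Exports.
Local Open Scope classical_set_scope.
Local Open Scope ring_scope.


Definition ONS {R : realType} (phi : nat -> R -> R) : Prop :=
  (forall n, (0 < n)%N ->
     measurable_fun (`[0%R, 1%R] : set R) (phi n) /\
     (@lebesgue_measure R).-integrable (`[0%R, 1%R] : set R) (fun x => ((phi n x) ^+ 2)%:E)) /\
  (forall n m, (0 < n)%N -> (0 < m)%N ->
     Rintegral (@lebesgue_measure R) (`[0%R, 1%R] : set R) (fun x => phi n x * phi m x) = (n == m)%:R).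

Definition in_l2 {R : realType} (a : nat -> R) : Prop :=
  (\sum_(1 <= n <oo) ((a n) ^+ 2)%:E < +oo)%E.

Definition Qn {R : realType} (phi : nat -> R -> R) (d a : nat -> R) (n : nat)
  (x : R) : R :=
  \sum_(1 <= k < n.+1) d k * a k * ln (k%:R) * phi k x.

(* B_n(d,a) = max_{1 <= i < n} | int_0^{i/n} Q_n(d,a,x) dx |  (= 0 if n <= 1) *)
Definition Bn {R : realType} (phi : nat -> R -> R) (d a : nat -> R) (n : nat) : R :=
  \big[Num.max/0]_(1 <= i < n)
     `| Rintegral (@lebesgue_measure R) (`[0%R, (i%:R / n%:R)] : set R) (Qn phi d a n) |.

Definition Ck {R : realType} (phi : nat -> R -> R) (f : R -> R) (k : nat) : R :=
  Rintegral (@lebesgue_measure R) (`[0%R, 1%R] : set R) (fun x => f x * phi k x).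

(* Main.v *)
Require Import Defs.
From HB Require Import structures.
From mathcomp Require Import all_boot all_order all_algebra.
From mathcomp Require Import all_classical all_reals all_analysis.
From mathcomp Require Import measurable_realfun.
From mathcomp Require Import ring lra.
Set Implicit Arguments. Unset Strict Implicit. Unset Printing Implicit Defensive.
Import Order.TTheory GRing.Theory Num.Theory.
Import numFieldNormedType.Exports.
Local Open Scope classical_set_scope.
Local Open Scope ring_scope.

Section Basic.
Context {R : realType}.
Notation mu := (@lebesgue_measure R).
Implicit Types (u v h : R -> R).
Definition I01 : set R := `[0%R, 1%R].
Definition iI (u : R -> R) := mu.-integrable I01 (EFin \o u).
Definition RI (u : R -> R) := Rintegral mu I01 u.

Lemma mI : measurable (I01 : set (measurableTypeR R)). Proof. exact: measurable_itv. Qed.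
Lemma muI : (mu I01 < +oo)%E.
Proof. by rewrite /I01 lebesgue_measure_itv/= lte01 -EFinB ltry. Qed.

Lemma iI_D u v : iI u -> iI v -> iI (fun x => u x + v x).
Proof.
move=> hu hv; apply: (eq_integrable mI _ _ _ (integrableD mI hu hv)) => x _ /=.
by rewrite EFinD.
Qed.

Lemma iI_Z c u : iI u -> iI (fun x => c * u x).
Proof.
move=> hu; apply: (eq_integrable mI _ _ _ (integrableZl mI c hu)) => x _ /=.
by rewrite EFinM.
Qed.

Lemma iI_B u v : iI u -> iI v -> iI (fun x => u x - v x).
Proof.
move=> hu hv; apply: (eq_integrable mI _ _ _ (iI_D hu (iI_Z (-1) hv))) => x _ /=.
by rewrite mulN1r.
Qed.

Lemma iI_ext u v : (forall x, I01 x -> u x = v x) -> iI u -> iI v.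
Proof. by move=> h hu; apply: (eq_integrable mI _ _ _ hu) => x /set_mem /h /= ->. Qed.

Lemma iI_0 : iI (fun=> 0).
Proof. by apply: (eq_integrable mI _ _ _ (@integrable0 _ _ _ mu I01)) => x _. Qed.

Lemma iI_sum (s : seq nat) (P : pred nat) (F : nat -> R -> R) :
  (forall i, i \in s -> P i -> iI (F i)) -> iI (fun x => \sum_(i <- s | P i) F i x).
Proof.
elim: s => [|i s IH] hF.
  apply: (iI_ext (u := fun=> 0)); first by move=> x _; rewrite big_nil.
  exact: iI_0.
apply: (iI_ext (u := fun x => (if P i then F i x else 0) + \sum_(j <- s | P j) F j x)).
  by move=> x _; rewrite big_cons; case: ifP => //; rewrite add0r.
apply: iI_D; last by apply: IH => j js; apply: hF; rewrite inE js orbT.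
case Pi: (P i); first by apply: hF => //; rewrite inE eqxx.
exact: iI_0.
Qed.

Lemma iI_le u v : measurable_fun I01 u -> (forall x, I01 x -> `|u x| <= v x) ->
  iI v -> iI u.
Proof.
move=> mu hv iv; apply: le_integrable iv => //; first exact: mI.
  exact/measurable_EFinP.
move=> x Ix /=; rewrite lee_fin; apply: le_trans (hv x Ix) _.
exact: ler_norm.
Qed.

Lemma bdd_of (h : R -> R) M : (forall x, I01 x -> `|h x| <= M) ->
  [bounded h x | x in I01].
Proof.
move=> hM; exists M; split; first by rewrite num_real.
move=> y My x Ix /=; apply: le_trans (hM x Ix) _; exact: ltW.
Qed.

Lemma iI_bdd (h : R -> R) M : measurable_fun I01 h ->
  (forall x, I01 x -> `|h x| <= M) -> iI h.
Proof.
move=> mh hM; apply: measurable_bounded_integrable => //; first exact: mI.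
  exact: muI.
exact: bdd_of hM.
Qed.

Lemma iI_Mb (h u : R -> R) M : measurable_fun I01 h ->
  (forall x, I01 x -> `|h x| <= M) -> iI u -> iI (fun x => h x * u x).
Proof.
move=> mh hM iu; apply: (eq_integrable mI _ _ _ (integrableMr mI mh (bdd_of hM) iu)) => x _ /=.
by rewrite EFinM.
Qed.

Lemma iI_m u : iI u -> measurable_fun I01 u.
Proof. by case/integrableP => /measurable_EFinP. Qed.

Lemma RI_D u v : iI u -> iI v -> RI (fun x => u x + v x) = RI u + RI v.
Proof. by move=> hu hv; rewrite /RI RintegralD //; exact: mI. Qed.

Lemma RI_Z c u : iI u -> RI (fun x => c * u x) = c * RI u.
Proof. by move=> hu; rewrite /RI RintegralZl //; exact: mI. Qed.

Lemma RI_B u v : iI u -> iI v -> RI (fun x => u x - v x) = RI u - RI v.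
Proof. by move=> hu hv; rewrite /RI RintegralB //; exact: mI. Qed.

Lemma RI_sum (s : seq nat) (P : pred nat) (F : nat -> R -> R) :
  (forall i, i \in s -> P i -> iI (F i)) ->
  RI (fun x => \sum_(i <- s | P i) F i x) = \sum_(i <- s | P i) RI (F i).
Proof.
elim: s => [|i s IH] hF.
  rewrite big_nil; under [X in RI X]funext do rewrite big_nil.
  by rewrite /RI /Rintegral integral0.
rewrite big_cons; under [X in RI X]funext do rewrite big_cons.
have hF' : forall j, j \in s -> P j -> iI (F j).
  by move=> j js; apply: hF; rewrite inE js orbT.
case: ifP => Pi; last by rewrite IH.
by rewrite RI_D ?IH //; [apply: hF => //; rewrite inE eqxx | exact: iI_sum].
Qed.

Lemma RI_le u v : iI u -> iI v -> (forall x, I01 x -> u x <= v x) -> RI u <= RI v.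
Proof. by move=> hu hv h; apply: le_Rintegral => //; exact: mI. Qed.

Lemma RI_norm u : iI u -> `|RI u| <= RI (fun x => `|u x|).
Proof. by move=> hu; apply: le_normr_Rintegral => //; exact: mI. Qed.

Lemma RI_ext u v : (forall x, I01 x -> u x = v x) -> RI u = RI v.
Proof. by move=> h; apply: eq_Rintegral => x /set_mem; exact: h. Qed.



Lemma RI_indicM (P : set R) f : I01 `&` P = P ->
  RI (fun x => \1_P x * f x) = Rintegral mu P f.
Proof.
move=> IP; rewrite /RI -{2}IP Rintegral_mkcondr; apply: eq_Rintegral => x _.
by rewrite /patch indicE; case: ifP => _; rewrite ?mul1r ?mul0r.
Qed.

Lemma sub_I01 (p q : R) : 0 <= p -> q <= 1 -> I01 `&` `[p, q]%classic = `[p, q]%classic.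
Proof.
move=> p0 q1; apply/seteqP; split => x /=; first by case.
rewrite /I01 !in_itv /= => /andP[px xq]; split; last by rewrite px xq.
by rewrite in_itv /= (le_trans p0 px) (le_trans xq q1).
Qed.

Lemma RI_indic (p q : R) : 0 <= p -> p <= q -> q <= 1 ->
  RI (fun x => \1_(`[p, q] : set R) x) = q - p.
Proof.
move=> p0 pq q1.
have -> : RI (fun x => \1_(`[p, q] : set R) x) = RI (fun x => \1_(`[p, q] : set R) x * 1).
  by apply: RI_ext => x _; rewrite mulr1.
rewrite RI_indicM ?sub_I01 // Rintegral_cst; last exact: measurable_itv.
rewrite mul1r.
have E := lebesgue_measure_itv `[p, q].
transitivity (fine (lebesgue_measure (`[p, q]%classic : set R))); first by [].
rewrite E /=.
case: ltP => //= h; rewrite lee_fin in h.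
by apply/esym/eqP; rewrite subr_eq0 eq_le pq h.
Qed.

Lemma m_indic (p q : R) : measurable_fun I01 (fun x : R => (\1_(`[p, q]%classic : set R) x : R)).
Proof. exact: measurable_indic. Qed.

Lemma bd_indic (p q : R) (x : R) : `|(\1_(`[p, q]%classic : set R) x : R)| <= 1.
Proof. by rewrite indicE; case: (x \in _); rewrite ?normr1 ?normr0. Qed.

End Basic.

Lemma norm_le_1sq {R : realType} (y : R) : `|y| <= 1 + y ^+ 2.
Proof. rewrite -real_normK ?num_real; have := normr_ge0 y; nra. Qed.

Lemma normM_le_sq {R : realType} (y z : R) : `|y * z| <= y ^+ 2 + z ^+ 2.
Proof.
rewrite normrM -(real_normK (num_real y)) -(real_normK (num_real z)).
have := normr_ge0 y; have := normr_ge0 z; nra.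
Qed.

Section ONSfacts.
Context {R : realType} (phi : nat -> R -> R) (Hons : ONS phi).

Lemma phi_m k : (0 < k)%N -> measurable_fun I01 (phi k).
Proof. by move=> hk; have [h _] := Hons; exact: (h k hk).1. Qed.

Lemma phi2_i k : (0 < k)%N -> iI (fun x => phi k x ^+ 2).
Proof. by move=> hk; have [h _] := Hons; exact: (h k hk).2. Qed.

Lemma phi_i k : (0 < k)%N -> iI (phi k).
Proof.
move=> hk; apply: (@iI_le _ _ (fun x => 1 + phi k x ^+ 2)).
- exact: phi_m.
- by move=> x _; exact: norm_le_1sq.
apply: iI_D; last exact: phi2_i.
apply: (@iI_bdd _ _ 1) => //; by move=> x _; rewrite normr1.
Qed.

Lemma phiphi_i k j : (0 < k)%N -> (0 < j)%N -> iI (fun x => phi k x * phi j x).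
Proof.
move=> hk hj; apply: (@iI_le _ _ (fun x => phi k x ^+ 2 + phi j x ^+ 2)).
- by apply: measurable_funM; exact: phi_m.
- by move=> x _; exact: normM_le_sq.
by apply: iI_D; exact: phi2_i.
Qed.

Lemma orth k j : (0 < k)%N -> (0 < j)%N ->
  RI (fun x => phi k x * phi j x) = (k == j)%:R.
Proof. by move=> hk hj; have [_ h] := Hons; exact: h. Qed.

Lemma hphi_i (h : R -> R) (M : R) k : (0 < k)%N -> measurable_fun I01 h ->
  (forall x, I01 x -> `|h x| <= M) -> iI (fun x => h x * phi k x).
Proof. by move=> hk mh hM; apply: iI_Mb mh hM _; exact: phi_i. Qed.

End ONSfacts.

Section Qfacts.
Context {R : realType} (phi : nat -> R -> R) (Hons : ONS phi) (d a : nat -> R) (n : nat).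

Definition cc k := d k * a k * ln (k%:R : R).
Let Q := Qn phi d a n.

Lemma QE x : Q x = \sum_(1 <= k < n.+1) cc k * phi k x.
Proof. by []. Qed.

Lemma iota_pos i : i \in index_iota 1 n.+1 -> (0 < i)%N.
Proof. by rewrite mem_index_iota => /andP[]. Qed.

Lemma Q_i : iI Q.
Proof.
apply: (iI_ext (u := fun x => \sum_(1 <= k < n.+1) cc k * phi k x)) => //.
apply: iI_sum => i /iota_pos hi _; apply: iI_Z; exact: phi_i.
Qed.

Lemma Q_m : measurable_fun I01 Q.
Proof. exact: iI_m Q_i. Qed.

Lemma Q2E x : Q x ^+ 2 = \sum_(1 <= k < n.+1) \sum_(1 <= j < n.+1)
   (cc k * cc j) * (phi k x * phi j x).
Proof.
rewrite expr2 QE big_distrl /=; apply: eq_bigr => k _.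
rewrite big_distrr /=; apply: eq_bigr => j _; ring.
Qed.

Lemma Q2_i : iI (fun x => Q x ^+ 2).
Proof.
apply: (iI_ext (u := fun x => \sum_(1 <= k < n.+1) \sum_(1 <= j < n.+1)
   (cc k * cc j) * (phi k x * phi j x))); first by move=> x _; rewrite Q2E.
apply: iI_sum => k /iota_pos hk _; apply: iI_sum => j /iota_pos hj _.
by apply: iI_Z; exact: phiphi_i.
Qed.

Lemma Q2 : RI (fun x => Q x ^+ 2) = \sum_(1 <= k < n.+1) cc k ^+ 2.
Proof.
rewrite (RI_ext (v := fun x => \sum_(1 <= k < n.+1) \sum_(1 <= j < n.+1)
   (cc k * cc j) * (phi k x * phi j x))); last by move=> x _; rewrite Q2E.
rewrite RI_sum; last first.
  move=> k /iota_pos hk _; apply: iI_sum => j /iota_pos hj _.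
  by apply: iI_Z; exact: phiphi_i.
apply: eq_big_seq => k /[dup] kin /iota_pos hk.
rewrite RI_sum; last by move=> j /iota_pos hj _; apply: iI_Z; exact: phiphi_i.
rewrite (bigD1_seq k) //= ?iota_uniq // RI_Z ?orth // ?eqxx; last exact: phiphi_i.
rewrite big1_seq ?addr0 ?mulr1 ?expr2 //.
move=> j /andP[jk /iota_pos hj]; rewrite RI_Z ?orth //; last exact: phiphi_i.
by rewrite eq_sym (negbTE jk) mulr0.
Qed.

Lemma fQ (f : R -> R) M : measurable_fun I01 f -> (forall x, I01 x -> `|f x| <= M) ->
  RI (fun x => f x * Q x) = \sum_(1 <= k < n.+1) cc k * Ck phi f k.
Proof.
move=> mf hM.
rewrite (RI_ext (v := fun x => \sum_(1 <= k < n.+1) cc k * (f x * phi k x))); last first.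
  by move=> x _; rewrite QE big_distrr /=; apply: eq_bigr => k _; ring.
rewrite RI_sum; last by move=> k /iota_pos hk _; apply: iI_Z; exact: hphi_i hM.
apply: eq_big_seq => k /iota_pos hk; rewrite RI_Z //; exact: hphi_i hM.
Qed.

Lemma fQ_i (f : R -> R) M : measurable_fun I01 f -> (forall x, I01 x -> `|f x| <= M) ->
  iI (fun x => f x * Q x).
Proof. by move=> mf hM; apply: iI_Mb mf hM Q_i. Qed.

End Qfacts.

Section Step.
Context {R : realType} (f : R -> R) (fnd : nondecreasing_fun f) (n : nat) (n0 : (0 < n)%N).

Definition grid (i : nat) : R := i%:R / n%:R.
Definition Dl i := f (grid i.+1) - f (grid i).
Definition sf (x : R) : R :=
  f 1 - \sum_(1 <= i < n) Dl i * \1_(`[0, grid i]%classic : set R) x.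
Definition wf (x : R) : R :=
  \sum_(0 <= i < n) Dl i * \1_(`[grid i, grid i.+1]%classic : set R) x.

Lemma nR_gt0 : 0 < (n%:R : R). Proof. by rewrite ltr0n. Qed.

Lemma grid_le i j : (i <= j)%N -> grid i <= grid j.
Proof. by move=> ij; rewrite /grid ler_wpM2r ?invr_ge0 ?ler0n ?ler_nat. Qed.

Lemma grid_lt i j : (i < j)%N -> grid i < grid j.
Proof. by move=> ij; rewrite /grid ltr_pM2r ?invr_gt0 ?nR_gt0 ?ltr_nat. Qed.

Lemma grid0 : grid 0 = 0. Proof. by rewrite /grid mul0r. Qed.
Lemma gridn : grid n = 1. Proof. by rewrite /grid divff // gt_eqF // nR_gt0. Qed.
Lemma grid_ge0 i : 0 <= grid i. Proof. by rewrite -grid0 grid_le. Qed.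
Lemma grid_le1 i : (i <= n)%N -> grid i <= 1. Proof. by move=> h; rewrite -gridn grid_le. Qed.
Lemma grid_S i : grid i.+1 - grid i = n%:R^-1.
Proof. by rewrite /grid -mulrBl -natrB // subSnn mul1r. Qed.

Lemma Dl_ge0 i : 0 <= Dl i.
Proof. by rewrite /Dl subr_ge0; apply: fnd; apply: grid_le. Qed.

Lemma locate_aux x : 0 < x -> forall m, x <= grid m ->
  exists j, [/\ (j < m)%N, grid j < x & x <= grid j.+1].
Proof.
move=> x0; elim => [|m IH] hm.
  by move: hm; rewrite grid0 => /(lt_le_trans x0); rewrite ltxx.
have [xm|mx] := leP x (grid m).
  by have [j [jm h1 h2]] := IH xm; exists j; split => //; apply: ltnW.
by exists m; split.
Qed.

Lemma locate x : I01 x -> exists j, [/\ (j < n)%N, grid j <= x, x <= grid j.+1 &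
  forall i, (0 < i)%N -> (x <= grid i) = (j < i)%N].
Proof.
rewrite /I01 /= in_itv /= => /andP[x0 x1].
have [->|xpos] := eqVneq x 0.
  exists 0%N; split => //; rewrite ?grid0 ?grid_ge0 //.
  by move=> i ->; rewrite grid_ge0.
have xp : 0 < x by rewrite lt_neqAle eq_sym xpos x0.
have xn : x <= grid n by rewrite gridn.
have [j [jn h1 h2]] := locate_aux xp xn.
exists j; split => //; first exact: ltW.
move=> i i0; case: (ltnP j i) => ji.
  by apply/(le_trans h2)/grid_le.
by apply/negbTE; rewrite -ltNge (le_lt_trans _ h1) // grid_le.
Qed.

Lemma indic01 x (t : R) : I01 x -> \1_(`[0, t]%classic : set R) x = (((x <= t)%R : bool)%:R : R).
Proof.
rewrite /I01 /= in_itv /= => /andP[x0 x1]; rewrite indicE.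
have -> : (x \in `[0, t]%classic) = (x <= t)%R; last by [].
by apply/idP/idP; [move=> /set_mem; rewrite /= in_itv /= => /andP[] | move=> xt; apply/mem_set; rewrite /= in_itv /= x0 xt].
Qed.

Lemma sf_val x j : I01 x -> (j < n)%N ->
  (forall i, (0 < i)%N -> (x <= grid i) = (j < i)%N) -> sf x = f (grid j.+1).
Proof.
move=> Ix jn hj; rewrite /sf.
rewrite (big_cat_nat _ (n := j.+1)) //=.
rewrite big1_seq; last first.
  move=> i /andP[_]; rewrite mem_index_iota => /andP[i1 ij].
  by rewrite indic01 // hj // ltnNge -ltnS ij mulr0.
rewrite add0r.
rewrite (eq_big_seq (fun i => Dl i)); last first.
  move=> i; rewrite mem_index_iota => /andP[ji _].
  by rewrite indic01 // hj ?ji ?mulr1 // (leq_trans _ ji).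
rewrite telescope_sumr // gridn; ring.
Qed.

Let M := `|f 0| + `|f 1|.

Lemma f_bd x : I01 x -> `|f x| <= M.
Proof.
rewrite /I01 /= in_itv /= => /andP[x0 x1].
have h0 := fnd x0; have h1 := fnd x1.
rewrite /M; have := normr_ge0 (f 0); have := normr_ge0 (f 1).
have := ler_norm (f 1); have := ler_norm (- f 0); rewrite normrN.
move=> a b c d; rewrite ler_norml; apply/andP; split; lra.
Qed.

Lemma sf_bd x : I01 x -> `|sf x| <= M.
Proof.
move=> Ix; have [j [jn _ _ hj]] := locate Ix; rewrite (sf_val Ix jn hj).
apply: f_bd; rewrite /I01 /= in_itv /= grid_ge0 grid_le1 //.
Qed.

Lemma wf_ge x j : I01 x -> (j < n)%N -> grid j <= x -> x <= grid j.+1 -> Dl j <= wf x.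
Proof.
move=> Ix jn h1 h2; rewrite /wf (bigD1_seq j) /= ?mem_index_iota ?iota_uniq //.
rewrite indicE mem_set /=; last by rewrite in_itv /= h1 h2.
rewrite mulr1 lerDl; apply: sumr_ge0 => i _; apply: mulr_ge0; first exact: Dl_ge0.
by rewrite indicE ler0n.
Qed.

Lemma g2_bd x : I01 x -> (f x - sf x) ^+ 2 <= 2 * M * wf x.
Proof.
move=> Ix; have [j [jn h1 h2 hj]] := locate Ix.
have hw := wf_ge Ix jn h1 h2.
have hs := sf_val Ix jn hj.
have a1 : f (grid j) <= f x by apply: fnd.
have a2 : f x <= f (grid j.+1) by apply: fnd.
have hf := f_bd Ix; have hsb := sf_bd Ix.
move: hf hsb; rewrite !ler_norml => /andP[b1 b2] /andP[b3 b4].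
move: hw; rewrite /Dl => hw.
have M0 : 0 <= M by rewrite addr_ge0.
nra.
Qed.

Lemma m_sf : measurable_fun I01 sf.
Proof.
apply: measurable_funB; first exact: measurable_cst.
apply: measurable_sum => i; apply: measurable_funM; first exact: measurable_cst.
exact: m_indic.
Qed.

Lemma m_wf : measurable_fun I01 wf.
Proof.
apply: measurable_sum => i; apply: measurable_funM; first exact: measurable_cst.
exact: m_indic.
Qed.

Lemma wf_i : iI wf.
Proof.
apply: iI_sum => i _ _; apply: iI_Z; apply: (@iI_bdd _ _ 1); first exact: m_indic.
by move=> x _; exact: bd_indic.
Qed.

Lemma RI_wf : RI wf = (f 1 - f 0) / n%:R.
Proof.
rewrite /wf RI_sum; last first.
  move=> i _ _; apply: iI_Z; apply: (@iI_bdd _ _ 1); first exact: m_indic.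
  by move=> x _; exact: bd_indic.
rewrite (eq_big_seq (fun i => Dl i / n%:R)); last first.
  move=> i; rewrite mem_index_iota => /andP[_ ilt].
  rewrite RI_Z; last first.
    apply: (@iI_bdd _ _ 1); first exact: m_indic.
    by move=> x _; exact: bd_indic.
  by rewrite RI_indic ?grid_ge0 ?grid_le1 ?grid_S // grid_le.
rewrite -big_distrl /= telescope_sumr // gridn grid0.
by [].
Qed.

Lemma RI_sQ (q : R -> R) : iI q ->
  RI (fun x => sf x * q x) = f 1 * RI q -
     \sum_(1 <= i < n) Dl i * Rintegral (@lebesgue_measure R) `[0, grid i] q.
Proof.
move=> iq.
have hi : forall i, iI (fun x => \1_(`[0, grid i]%classic : set R) x * q x).
  by move=> i; apply: (@iI_Mb _ _ _ 1) iq; [exact: m_indic | move=> x _; exact: bd_indic].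
rewrite (RI_ext (v := fun x => f 1 * q x -
   \sum_(1 <= i < n) Dl i * (\1_(`[0, grid i]%classic : set R) x * q x))); last first.
  move=> x _; rewrite /sf mulrBl big_distrl /=; congr (_ - _).
  by apply: eq_bigr => i _; ring.
rewrite RI_B ?RI_Z //; last 2 first.
- exact: iI_Z.
- by apply: iI_sum => i _ _; apply: iI_Z.
rewrite RI_sum; last by move=> i _ _; apply: iI_Z.
congr (_ - _); apply: eq_big_seq => i; rewrite mem_index_iota => /andP[_ ilt].
by rewrite RI_Z // RI_indicM // sub_I01 // grid_le1 // ltnW.
Qed.

End Step.

Lemma amgm {R : realType} (m y z : R) : 0 < m ->
  `|y * z| <= 2^-1 * (m * y ^+ 2 + m^-1 * z ^+ 2).
Proof.
move=> m0; rewrite normrM -(real_normK (num_real y)) -(real_normK (num_real z)).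
have a0 := normr_ge0 y; have b0 := normr_ge0 z.
move: (`|y|) (`|z|) a0 b0 => a b a0 b0.
rewrite -(ler_pM2l m0).
have -> : m * (2^-1 * (m * a ^+ 2 + m^-1 * b ^+ 2)) = 2^-1 * (m^2 * a^2 + b^2).
  by field; rewrite gt_eqF.
have := sqr_ge0 (m * a - b); nra.
Qed.

Lemma le_bigmax0 {R : realType} (s : seq nat) (F : nat -> R) i : i \in s ->
  F i <= \big[Num.max/0]_(j <- s) F j.
Proof.
elim: s => [//|j s IH]; rewrite inE big_cons => /orP[/eqP ->|js].
  by rewrite le_max lexx.
by rewrite le_max IH ?orbT.
Qed.

Section Core.
Context {R : realType} (phi : nat -> R -> R) (Hons : ONS phi) (d a : nat -> R)
  (n : nat) (n2 : (1 < n)%N) (f : R -> R) (fnd : nondecreasing_fun f).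

Let n0 : (0 < n)%N := ltnW n2.
Let Q := Qn phi d a n.
Let B := Bn phi d a n.
Let M : R := `|f 0| + `|f 1|.
Let S := \sum_(1 <= k < n.+1) cc d a k ^+ 2.
Let nR : R := n%:R.
Let nR0 : 0 < nR. Proof. by rewrite ltr0n. Qed.

Lemma G_bd i : (0 < i)%N -> (i < n)%N ->
  `|Rintegral (@lebesgue_measure R) `[0, grid n i] Q| <= B.
Proof.
move=> i0 iN; rewrite /B /Bn.
apply: (@le_bigmax0 R _ (fun i => `|Rintegral (@lebesgue_measure R)
   `[0, (i%:R / n%:R)] (Qn phi d a n)|)).
by rewrite mem_index_iota i0 iN.
Qed.

Lemma uQ_bd (u : R -> R) (K : R) : measurable_fun I01 u -> (forall x, I01 x -> `|u x| <= K) ->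
  `|RI (fun x => u x * Q x)| <= 2^-1 * (nR * RI (fun x => u x ^+ 2) + nR^-1 * S).
Proof.
move=> mu hK.
have iq := Q_i Hons d a n.
have iq2 := Q2_i Hons d a n.
have iuq : iI (fun x => u x * Q x) := iI_Mb mu hK iq.
have iu2 : iI (fun x => u x ^+ 2).
  apply: (@iI_bdd _ _ (K ^+ 2)); first by apply: measurable_funM.
  move=> x Ix; rewrite normrX; have := hK x Ix; have := normr_ge0 (u x); nra.
apply: le_trans (RI_norm iuq) _.
have -> : S = RI (fun x => Q x ^+ 2) by rewrite Q2.
rewrite -RI_Z // -RI_Z // -RI_D; [|exact: iI_Z|exact: iI_Z].
rewrite -RI_Z; last by apply: iI_D; exact: iI_Z.
apply: RI_le.
- exact: integrable_norm iuq.
- by apply: iI_Z; apply: iI_D; exact: iI_Z.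
by move=> x _; exact: amgm.
Qed.

Let t : R := grid n n.-1.
Let r x : R := 1 - \1_(`[0, t]%classic : set R) x.

Lemma t_le1 : t <= 1. Proof. by rewrite /t grid_le1 // leq_pred. Qed.

Lemma RQ_split : RI Q = Rintegral (@lebesgue_measure R) `[0, t] Q + RI (fun x => r x * Q x).
Proof.
have iq := Q_i Hons d a n.
have h1 : iI (fun x => \1_(`[0, t]%classic : set R) x * Q x).
  by apply: (@iI_Mb _ _ _ 1) iq; [exact: m_indic | move=> x _; exact: bd_indic].
have h2 : iI (fun x => r x * Q x).
  apply: (@iI_Mb _ _ _ 2) iq.
    by apply: measurable_funB; [exact: measurable_cst | exact: m_indic].
  move=> x _; rewrite /r; apply: le_trans (ler_normB _ _) _.
  by rewrite normr1 (lerD2l 1 _ 1) bd_indic.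
rewrite -RI_indicM; last by rewrite sub_I01 // t_le1.
rewrite -RI_D //; apply: RI_ext => x _; rewrite /r; ring.
Qed.

Lemma r2_le x : I01 x -> r x ^+ 2 <= \1_(`[t, 1]%classic : set R) x.
Proof.
move=> Ix; rewrite /r indic01 //.
have [xt|tx] := leP x t; first by rewrite subrr expr0n /= indicE ler0n.
rewrite subr0 expr1n indicE mem_set //=.
move: Ix; rewrite /I01 /= !in_itv /= => /andP[_ ->]; rewrite ltW //.
Qed.

Lemma RQ_bd : `|RI Q| <= B + 2^-1 * (1 + nR^-1 * S).
Proof.
rewrite RQ_split; apply: le_trans (ler_normD _ _) _; apply: lerD.
  by apply: G_bd; [rewrite -ltnS prednK | rewrite ltn_predL].
have mr : measurable_fun I01 r.
  by apply: measurable_funB; [exact: measurable_cst | exact: m_indic].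
have hr : forall x, I01 x -> `|r x| <= 2.
  move=> x _; rewrite /r; apply: le_trans (ler_normB _ _) _.
  by rewrite normr1 (lerD2l 1 _ 1) bd_indic.
apply: le_trans (uQ_bd mr hr) _.
rewrite ler_pM2l ?invr_gt0 // lerD2r.
have : RI (fun x => r x ^+ 2) <= nR^-1.
  apply: le_trans (RI_le _ _ r2_le) _.
  - apply: (@iI_bdd _ _ 4); first by apply: measurable_funM.
    by move=> x Ix; rewrite normrX; have := hr x Ix; have := normr_ge0 (r x); nra.
  - by apply: (@iI_bdd _ _ 1); [exact: m_indic | move=> x _; exact: bd_indic].
  rewrite RI_indic ?t_le1 ?grid_ge0 // /t.
  have E := grid_S (R:=R) n n.-1; rewrite prednK // in E.
  by rewrite -{1}(gridn (R:=R) n0) E.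
move=> h; have := ler_wpM2l (ltW nR0) h; rewrite mulfV ?gt_eqF //.
Qed.


Let mf : measurable_fun I01 f.
Proof. by apply: nondecreasing_measurable fnd; exact: measurable_itv. Qed.

Let M0 : 0 <= M. Proof. by rewrite addr_ge0. Qed.

Lemma gQ_bd : `|RI (fun x => (f x - sf f n x) * Q x)| <=
   2^-1 * (2 * M * (f 1 - f 0) + nR^-1 * S).
Proof.
have mg : measurable_fun I01 (fun x => f x - sf f n x).
  by apply: measurable_funB => //; exact: m_sf.
have hg : forall x, I01 x -> `|f x - sf f n x| <= 2 * M.
  move=> x Ix; apply: le_trans (ler_normB _ _) _.
  have := f_bd fnd Ix; have := sf_bd fnd n0 Ix; rewrite /M; lra.
apply: le_trans (uQ_bd mg hg) _.
rewrite ler_pM2l ?invr_gt0 // lerD2r.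
have ig2 : iI (fun x => (f x - sf f n x) ^+ 2).
  apply: (@iI_bdd _ _ ((2 * M) ^+ 2)); first by apply: measurable_funM.
  move=> x Ix; rewrite normrX; have := hg x Ix.
  have := normr_ge0 (f x - sf f n x); nra.
have h : RI (fun x => (f x - sf f n x) ^+ 2) <= 2 * M * ((f 1 - f 0) / nR).
  rewrite -(RI_wf f n0) -RI_Z; last exact: wf_i.
  apply: RI_le => //; first by apply: iI_Z; exact: wf_i.
  by move=> x Ix; exact: g2_bd.
have := ler_wpM2l (ltW nR0) h.
suff -> : nR * (2 * M * ((f 1 - f 0) / nR)) = 2 * M * (f 1 - f 0) by [].
by field; rewrite gt_eqF.
Qed.

Lemma B_ge0 : 0 <= B.
Proof. by apply: le_trans (G_bd (i := 1) _ n2). Qed.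

Lemma sQ_bd : `|RI (fun x => sf f n x * Q x)| <= M * `|RI Q| + B * (f 1 - f 0).
Proof.
rewrite RI_sQ //; last exact: Q_i.
apply: le_trans (ler_normB _ _) _; apply: lerD.
  rewrite normrM ler_wpM2r //; rewrite /M lerDr //.
apply: le_trans (ler_norm_sum _ _ _) _.
apply: (@le_trans _ _ (\sum_(1 <= i < n) Dl f n i * B)).
  apply: ler_sum_nat => i /andP[i0 iN]; rewrite normrM ger0_norm ?Dl_ge0 //.
  by rewrite ler_wpM2l ?Dl_ge0 // G_bd.
rewrite -big_distrl /= telescope_sumr // gridn // mulrC ler_wpM2l ?B_ge0 //.
by rewrite lerD2l lerN2 fnd // grid_ge0.
Qed.

Lemma core_bd : `|\sum_(1 <= k < n.+1) cc d a k * Ck phi f k| <=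
  M * (B + 2^-1 * (1 + nR^-1 * S)) + B * (f 1 - f 0) +
  2^-1 * (2 * M * (f 1 - f 0) + nR^-1 * S).
Proof.
rewrite -(fQ Hons d a n mf (f_bd fnd)).
have iq := Q_i Hons d a n.
have isq : iI (fun x => sf f n x * Q x).
  by apply: (iI_Mb (m_sf f n) (sf_bd fnd n0)).
have igq : iI (fun x => (f x - sf f n x) * Q x).
  apply: (@iI_Mb _ _ _ (2 * M)) iq.
    by apply: measurable_funB => //; exact: m_sf.
  move=> x Ix; apply: le_trans (ler_normB _ _) _.
  have := f_bd fnd Ix; have := sf_bd fnd n0 Ix; rewrite /M; lra.
rewrite (RI_ext (v := fun x => sf f n x * Q x + (f x - sf f n x) * Q x)); last first.
  by move=> x _ /=; rewrite /Q; ring.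
rewrite (RI_D isq igq); apply: le_trans (ler_normD _ _) _.
have := sQ_bd; have := gQ_bd; have := RQ_bd.
have := B_ge0.
move: (`|RI Q|) (RI (fun x => sf f n x * Q x)) (RI (fun x => (f x - sf f n x) * Q x)).
move=> q u v hB hq hv hu.
have := ler_wpM2l M0 hq; lra.
Qed.

End Core.

Lemma series_le {R : realType} (u : nat -> R) (c : R) : (forall k, 0 <= u k) ->
  (forall m, \sum_(1 <= k < m) u k <= c) -> (\sum_(1 <= k <oo) (u k)%:E <= c%:E)%E.
Proof.
move=> u0 hc; apply: lime_le.
  by apply: is_cvg_nneseries => k _ _; rewrite lee_fin.
by apply: nearW => m; rewrite sumEFin lee_fin.
Qed.

Lemma l2_of_bd {R : realType} (a : nat -> R) :
  (forall m, \sum_(1 <= k < m) a k ^+ 2 <= 1) -> in_l2 a.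
Proof.
move=> h; rewrite /in_l2; apply: le_lt_trans (series_le (c := 1) _ h) _ => //.
  by move=> k; exact: sqr_ge0.
exact: ltry.
Qed.

Lemma unbounded_of {R : realType} (b : nat -> R) :
  ~ (\sum_(1 <= k <oo) (b k ^+ 2)%:E < +oo)%E ->
  forall c : R, exists m, c < \sum_(1 <= k < m) b k ^+ 2.
Proof.
move=> hb c; apply: contrapT => hn; apply: hb.
apply: le_lt_trans (series_le (c := c) _ _) _ => //; first by move=> k; exact: sqr_ge0.
  by move=> m; rewrite leNgt; apply/negP => h; apply: hn; exists m.
exact: ltry.
Qed.

Section AbelDini.
Context {R : realType} (b : nat -> R)
  (hb : forall c : R, exists m, c < \sum_(1 <= k < m) b k ^+ 2).

Let T m : R := 1 + \sum_(1 <= k < m) b k ^+ 2.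
Let ad k : R := b k / T k.+1.

Let T_ge1 m : 1 <= T m.
Proof. by rewrite /T lerDl sumr_ge0 // => k _; exact: sqr_ge0. Qed.
Let T_gt0 m : 0 < T m. Proof. exact: lt_le_trans ltr01 (T_ge1 m). Qed.

Let TS k : (0 < k)%N -> T k.+1 = T k + b k ^+ 2.
Proof. by move=> k0; rewrite /T big_nat_recr //= addrA. Qed.

Let T_le_S m : T m <= T m.+1.
Proof.
case: m => [|m]; first by rewrite /T big_geq // big_geq.
by rewrite (TS (k := m.+1)) // lerDl sqr_ge0.
Qed.

Let T_mono m1 m2 : (m1 <= m2)%N -> T m1 <= T m2.
Proof.
move=> /subnK <-; elim: (m2 - m1)%N => [|k IH]; first by rewrite add0n.
by apply: le_trans IH _; rewrite addSn T_le_S.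
Qed.

Let sq_le (x e : R) : 1 <= x -> 0 <= e -> e / (x + e) ^+ 2 <= x^-1 - (x + e)^-1.
Proof.
move=> x1 e0.
have x0 : 0 < x by exact: lt_le_trans ltr01 x1.
have y0 : 0 < x + e by apply: lt_le_trans x0 _; rewrite lerDl.
have -> : x^-1 - (x + e)^-1 = e / (x * (x + e)).
  by field; rewrite !gt_eqF.
rewrite ler_wpM2l // lef_pV2 ?posrE ?mulr_gt0 ?exprn_gt0 //.
by rewrite expr2 ler_wpM2r ?(ltW y0) // lerDl.
Qed.

Lemma ad_l2 m : \sum_(1 <= k < m) ad k ^+ 2 <= 1.
Proof.
case: m => [|m]; first by rewrite big_geq.
apply: (@le_trans _ _ (\sum_(1 <= k < m.+1) ((- (T k.+1)^-1) - (- (T k)^-1)))).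
  apply: ler_sum_nat => k /andP[k0 _].
  rewrite /ad expr_div_n TS // opprK [X in _ <= X]addrC.
  by apply: sq_le => //; exact: sqr_ge0.
have E := @telescope_sumr R 1 m.+1 (fun k => - (T k)^-1) isT; rewrite /= in E.
have T1 : T 1 = 1 by rewrite /T big_geq // addr0.
rewrite E opprK T1 invr1.
by rewrite addrC lerBlDr lerDl invr_ge0 ltW.
Qed.

Let P m := \sum_(1 <= k < m) ad k * b k.

Let P_ge0 m : 0 <= P m.
Proof.
apply: sumr_ge0 => k _; rewrite /ad mulrAC -expr2.
by rewrite mulr_ge0 ?sqr_ge0 // invr_ge0 ltW.
Qed.

Let P_inc m1 m2 : (1 <= m1)%N -> (m1 <= m2)%N -> (T m2 - T m1) / T m2 <= P m2 - P m1.
Proof.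
move=> m10 m12; rewrite /P (@big_cat_nat _ _ _ m1 1 m2) //= addrC addrK.
rewrite -telescope_sumr // big_distrl /=.
apply: ler_sum_nat => k /andP[k1 k2].
have k0 : (0 < k)%N by apply: leq_trans k1.
rewrite /ad mulrAC -expr2 TS // addrAC subrr add0r mulrC [X in _ <= X]mulrC.
rewrite ler_wpM2r ?sqr_ge0 // lef_pV2 ?posrE //.
  by rewrite -TS //; apply: T_mono.
by rewrite -TS.
Qed.

Lemma P_unb j : forall N, (1 <= N)%N -> exists m, (N <= m)%N /\ j%:R / 2 <= P m.
Proof.
elim: j => [|j IH] N N1.
  by exists N; split => //; rewrite mul0r.
have [m [Nm hm]] := IH N N1.
have [m2 hm2] := hb (2 * T m - 1).
exists (maxn m m2); split; first exact: leq_trans Nm (leq_maxl _ _).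
have m1 : (1 <= m)%N by apply: leq_trans Nm.
have h := P_inc m1 (leq_maxl m m2).
have h2 : T m2 <= T (maxn m m2) by apply: T_mono; exact: leq_maxr.
have h3 : 2 * T m < T m2 by have -> : T m2 = 1 + \sum_(1 <= k < m2) b k ^+ 2 by []; lra.
set X := T (maxn m m2) in h h2.
have X0 : 0 < X by exact: T_gt0.
have : 2^-1 <= (X - T m) / X.
  rewrite ler_pdivlMr // ler_pdivrMl //; lra.
move: hm h; rewrite -natr1 /=; lra.
Qed.

Lemma abel_dini : exists a : nat -> R, (forall m, \sum_(1 <= k < m) a k ^+ 2 <= 1) /\
  forall (C : R) (N : nat), exists n, (N <= n)%N /\ C < \sum_(1 <= k < n.+1) a k * b k.
Proof.
exists ad; split; first exact: ad_l2.
move=> C N.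
have [j [Nj hj]] := P_unb (Num.Def.archi_bound (2 * `|C|)) (N := N.+1) isT.
exists j.-1; split; first by rewrite -ltnS prednK // (leq_trans _ Nj).
rewrite prednK ?(leq_trans _ Nj) //.
apply: lt_le_trans hj.
have := archi_boundP (normr_ge0 (2 * `|C|)).
rewrite normrM ger0_norm // normr_id.
have := ler_norm C; lra.
Qed.

End AbelDini.

Lemma D_bound {R : realType} (d : nat -> R) :
  (exists C : R, exists N : nat, forall n : nat, (N <= n)%N ->
     `|d n| <= C * (Num.sqrt (n%:R) / (ln (n.+1%:R)) ^+ 2)) ->
  exists D : R, 0 <= D /\ forall k, (0 < k)%N -> (d k * ln (k%:R : R)) ^+ 2 <= D * k%:R.
Proof.
move=> [C [N h]].
have l2 : 0 < ln (2 : R) by apply: ln_gt0; rewrite ltr1n.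
set D1 := C ^+ 2 / ln (2 : R) ^+ 2.
set D0 := \sum_(0 <= j < N) (d j * ln (j%:R : R)) ^+ 2.
have D10 : 0 <= D1 by rewrite /D1 mulr_ge0 ?sqr_ge0 // invr_ge0 sqr_ge0.
have D00 : 0 <= D0 by rewrite sumr_ge0 // => j _; exact: sqr_ge0.
exists (D1 + D0); split; first by rewrite addr_ge0.
move=> k k0.
have kR : 1 <= (k%:R : R) by rewrite ler1n.
have [kN|Nk] := ltnP k N.
  have : (d k * ln (k%:R : R)) ^+ 2 <= D0.
    rewrite /D0 (bigD1_seq k) /= ?mem_index_iota ?iota_uniq //.
    by rewrite lerDl sumr_ge0 // => j _; exact: sqr_ge0.
  move=> h1; apply: (le_trans h1); rewrite mulrDl.
  have : D0 <= D0 * k%:R by rewrite ler_peMr.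
  have : 0 <= D1 * k%:R by rewrite mulr_ge0 // ler0n.
  lra.
have hk := h k Nk.
set L := ln (k.+1%:R : R).
set l := ln (k%:R : R).
set s := Num.sqrt (k%:R : R).
have kpos : (k%:R : R) \in Num.pos by rewrite posrE ltr0n.
have k1pos : (k.+1%:R : R) \in Num.pos by rewrite posrE ltr0n.
have l0 : 0 <= l by rewrite /l ln_ge0.
have lL : l <= L by rewrite /l /L ler_ln // ler_nat.
have L2 : ln (2 : R) <= L by rewrite /L ler_ln // ?posrE ?ltr0n // ler_nat ltnS.
have L0 : 0 < L by apply: lt_le_trans l2 L2.
have s2 : s ^+ 2 = k%:R by rewrite /s sqr_sqrtr // ler0n.
have s0 : 0 <= s by rewrite /s sqrtr_ge0.
set X := `|d k|.
have X0 : 0 <= X by exact: normr_ge0.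
have h1 : X * L ^+ 2 <= C * s.
  move: hk; rewrite -/X -/L -/s => hk.
  have := ler_wpM2r (ltW (exprn_gt0 2 L0)) hk.
  by rewrite -mulrA -mulrA mulVf ?mulr1 // gt_eqF // exprn_gt0.
have h2 : X * l * L <= C * s.
  apply: le_trans h1; rewrite expr2 mulrA ler_wpM2r ?(ltW L0) //.
  by rewrite ler_wpM2l.
have h3 : 0 <= X * l * L by rewrite !mulr_ge0 // ltW.
have h4 : (X * l * L) ^+ 2 <= C ^+ 2 * k%:R.
  rewrite -s2 -exprMn ler_pXn2r // ?nnegrE //.
  by apply: le_trans h3 h2.
have -> : (d k * l) ^+ 2 = (X * l) ^+ 2 by rewrite /X exprMn -real_normK ?num_real // -exprMn.
have h5 : (X * l) ^+ 2 * ln (2 : R) ^+ 2 <= C ^+ 2 * k%:R.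
  apply: le_trans h4; rewrite [X in _ <= X]exprMn ler_wpM2l ?sqr_ge0 //.
  by rewrite ler_pXn2r // ?nnegrE ?(ltW l2) // (ltW L0).
have : (X * l) ^+ 2 <= D1 * k%:R.
  rewrite /D1 mulrAC ler_pdivlMr ?exprn_gt0 //.
have : 0 <= D0 * k%:R by rewrite mulr_ge0 // ler0n.
rewrite mulrDl; lra.
Qed.

Lemma S_bound {R : realType} (d a : nat -> R) (D : R) (n : nat) :
  (forall k, (0 < k)%N -> (d k * ln (k%:R : R)) ^+ 2 <= D * k%:R) -> 0 <= D ->
  (forall m, \sum_(1 <= k < m) a k ^+ 2 <= 1) -> (0 < n)%N ->
  (n%:R : R)^-1 * \sum_(1 <= k < n.+1) cc d a k ^+ 2 <= D.
Proof.
move=> hD D0 ha n0.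
have hs : \sum_(1 <= k < n.+1) cc d a k ^+ 2 <= D * n%:R.
  apply: (@le_trans _ _ (\sum_(1 <= k < n.+1) (D * n%:R) * a k ^+ 2)).
    apply: ler_sum_nat => k /andP[k0 kn].
    have -> : cc d a k ^+ 2 = (d k * ln (k%:R : R)) ^+ 2 * a k ^+ 2 by rewrite /cc; ring.
    apply: ler_wpM2r; first exact: sqr_ge0.
    apply: le_trans (hD k k0) _; apply: ler_wpM2l => //; rewrite ler_nat -ltnS //.
  rewrite -mulr_sumr; apply: ler_piMr; last exact: ha.
  by rewrite mulr_ge0 // ler0n.
by rewrite ler_pdivrMl ?ltr0n // mulrC.
Qed.

Lemma mono_thm {R : realType} (phi : nat -> R -> R) (d : nat -> R) :
  ONS phi ->
  (exists D : R, 0 <= D /\ forall k, (0 < k)%N -> (d k * ln (k%:R : R)) ^+ 2 <= D * k%:R) ->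
  (forall a : nat -> R, in_l2 a ->
     exists C : R, exists N : nat, forall n : nat, (N <= n)%N -> Bn phi d a n <= C) ->
  forall f : R -> R, nondecreasing_fun f ->
  (\sum_(1 <= k <oo) ((d k) ^+ 2 * (Ck phi f k) ^+ 2 * (ln (k%:R)) ^+ 2)%:E < +oo)%E.
Proof.
move=> Hons [D [D0 hD]] hB f fnd.
apply: contrapT => hinf.
set b := fun k => d k * ln (k%:R : R) * Ck phi f k.
have hinf' : ~ (\sum_(1 <= k <oo) (b k ^+ 2)%:E < +oo)%E.
  move=> h; apply: hinf; apply: le_lt_trans h; rewrite le_eqVlt; apply/orP; left.
  apply/eqP; apply: congr_lim; apply: funext => m; apply: eq_bigr => k _.
  by congr (_%:E); rewrite /b; ring.
have [a [ha hun]] := abel_dini (unbounded_of hinf').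
have [C0 [N0 hC]] := hB a (l2_of_bd ha).
set M : R := `|f 0| + `|f 1|.
have M0 : 0 <= M by rewrite addr_ge0.
have f10 : 0 <= f 1 - f 0 by rewrite subr_ge0 fnd // ler01.
set K := M * (C0 + 2^-1 * (1 + D)) + C0 * (f 1 - f 0) + 2^-1 * (2 * M * (f 1 - f 0) + D).
have [n [Nn hn]] := hun K (maxn N0 2).
have n2 : (1 < n)%N by apply: leq_trans Nn; rewrite leq_maxr.
have n0 : (0 < n)%N by apply: ltnW.
have hBn := hC n (leq_trans (leq_maxl _ _) Nn).
have hc := core_bd Hons d a n2 fnd.
have hS := S_bound hD D0 ha n0.
have Bge0 := B_ge0 phi d a n2.
have E : \sum_(1 <= k < n.+1) a k * b k = \sum_(1 <= k < n.+1) cc d a k * Ck phi f k.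
  by apply: eq_bigr => k _; rewrite /b /cc; ring.
rewrite E in hn.
have := lt_le_trans hn (le_trans (ler_norm _) hc).
move: (Bn phi d a n) hBn Bge0 => B hBn Bge0.
move: ((n%:R : R)^-1 * \sum_(1 <= k < n.+1) cc d a k ^+ 2) hS => s hS.
rewrite /K.
have e1 : M * B <= M * C0 by apply: ler_wpM2l.
have e2 : M * s <= M * D by apply: ler_wpM2l.
have e3 : B * (f 1 - f 0) <= C0 * (f 1 - f 0) by apply: ler_wpM2r.
move=> h; rewrite -/M in h; lra.
Qed.

Definition extI {R : realType} (g : R -> R) (x : R) : R :=
  if x <= 0 then g 0 else if 1 <= x then g 1 else g x.

Lemma in01 {R : realType} (x : R) : 0 <= x -> x <= 1 -> x \in `[0, 1].
Proof. by move=> x0 x1; rewrite in_itv /= x0 x1. Qed.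

Lemma extI_nd {R : realType} (g : R -> R) :
  {in `[0, 1] &, nondecreasing_fun g} -> nondecreasing_fun (extI g).
Proof.
move=> gnd x y xy; rewrite /extI.
have i0 : (0 : R) \in `[0, 1] by apply: in01; rewrite ?ler01.
have i1 : (1 : R) \in `[0, 1] by apply: in01; rewrite ?ler01.
have [x0|x0] := leP x 0; have [y0|y0] := leP y 0.
- by [].
- case: ifP => y1; first by apply: gnd => //; rewrite ler01.
  by apply: gnd => //; [apply: in01; rewrite ltW // ltNge y1 | exact: ltW].
- lra.
- case: ifP => x1.
    by case: ifP => y1 //; move: y1; rewrite (le_trans x1 xy).
  have x1' : x < 1 by rewrite ltNge x1.
  have ix : x \in `[0, 1] by apply: in01; exact: ltW.
  case: ifP => y1; first by apply: gnd => //; exact: ltW.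
  by apply: gnd => //; apply: in01; rewrite ?ltW // ltNge y1.
Qed.

Lemma extI_eq {R : realType} (g : R -> R) x : I01 x -> extI g x = g x.
Proof.
rewrite /I01 /= in_itv /= => /andP[x0 x1]; rewrite /extI.
case: ifP => h; first by have -> : x = 0 by apply/eqP; rewrite eq_le h x0.
case: ifP => h2 //; by have -> : x = 1 by apply/eqP; rewrite eq_le h2 x1.
Qed.

Lemma partial_bd {R : realType} (u : nat -> R) : (forall k, 0 <= u k) ->
  (\sum_(1 <= k <oo) (u k)%:E < +oo)%E -> exists c, forall m, \sum_(1 <= k < m) u k <= c.
Proof.
move=> u0 hfin.
have s0 : (0 <= \sum_(1 <= k <oo) (u k)%:E)%E.
  by apply: nneseries_ge0 => k _ _; rewrite lee_fin.
exists (fine (\sum_(1 <= k <oo) (u k)%:E)) => m.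
rewrite -lee_fin fineK; last by rewrite ge0_fin_numE.
rewrite -sumEFin; apply: nneseries_lim_ge => k _ _; by rewrite lee_fin.
Qed.

Theorem theorem3 (R : realType) (phi : nat -> R -> R) (d : nat -> R) :
  ONS phi ->
  (exists C : R, exists N : nat, forall n : nat, (N <= n)%N ->
     `|d n| <= C * (Num.sqrt (n%:R) / (ln (n.+1%:R)) ^+ 2)) ->
  (forall a : nat -> R, in_l2 a ->
     exists C : R, exists N : nat, forall n : nat, (N <= n)%N -> Bn phi d a n <= C) ->
  forall f : R -> R, bounded_variation 0 1 f ->
  (\sum_(1 <= k <oo) ((d k) ^+ 2 * (Ck phi f k) ^+ 2 * (ln (k%:R)) ^+ 2)%:E < +oo)%E.
Proof.
move=> Hons hd hB f bvf.
have hD := D_bound hd.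
set P := extI (fine \o neg_tv 0 (\- f)).
set N := extI (fine \o neg_tv 0 f).
have Pnd : nondecreasing_fun P.
  apply: extI_nd; apply: fine_neg_tv_nondecreasing; exact: bounded_variationN.
have Nnd : nondecreasing_fun N.
  by apply: extI_nd; apply: fine_neg_tv_nondecreasing.
have feq : forall x, I01 x -> f x = P x - N x.
  move=> x Ix; rewrite /P /N !extI_eq //.
  have := bounded_variation_pos_neg_tvE bvf (x := x).
  by rewrite /pos_tv /=; apply.
have hP := mono_thm Hons hD hB Pnd.
have hN := mono_thm Hons hD hB Nnd.
have [cP hcP] := partial_bd (fun k => mulr_ge0 (mulr_ge0 (sqr_ge0 _) (sqr_ge0 _)) (sqr_ge0 _)) hP.
have [cN hcN] := partial_bd (fun k => mulr_ge0 (mulr_ge0 (sqr_ge0 _) (sqr_ge0 _)) (sqr_ge0 _)) hN.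
have mP : measurable_fun I01 P by apply: nondecreasing_measurable Pnd; exact: measurable_itv.
have mN : measurable_fun I01 N by apply: nondecreasing_measurable Nnd; exact: measurable_itv.
have CkE : forall k, (0 < k)%N -> Ck phi f k = Ck phi P k - Ck phi N k.
  move=> k k0.
  have iP : iI (fun x => P x * phi k x) := hphi_i Hons k0 mP (f_bd Pnd).
  have iN : iI (fun x => N x * phi k x) := hphi_i Hons k0 mN (f_bd Nnd).
  change (RI (fun x => f x * phi k x) =
    RI (fun x => P x * phi k x) - RI (fun x => N x * phi k x)).
  by rewrite -RI_B //; apply: RI_ext => x Ix /=; rewrite feq //; ring.
apply: le_lt_trans (series_le (c := 2 * cP + 2 * cN) _ _) (ltry _).
  by move=> k; rewrite mulr_ge0 ?sqr_ge0 // mulr_ge0 ?sqr_ge0.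
move=> m.
apply: (@le_trans _ _ (\sum_(1 <= k < m) (2 * (d k ^+ 2 * Ck phi P k ^+ 2 * ln (k%:R : R) ^+ 2)
   + 2 * (d k ^+ 2 * Ck phi N k ^+ 2 * ln (k%:R : R) ^+ 2)))).
  apply: ler_sum_nat => k /andP[k0 _]; rewrite CkE //.
  set e := d k ^+ 2 * ln (k%:R : R) ^+ 2.
  have e0 : 0 <= e by rewrite /e mulr_ge0 ?sqr_ge0.
  have := sqr_ge0 (Ck phi P k + Ck phi N k).
  move: (Ck phi P k) (Ck phi N k) => x y h.
  have : e * ((x - y) ^+ 2) <= e * (2 * x ^+ 2 + 2 * y ^+ 2).
    by apply: ler_wpM2l => //; nra.
  rewrite /e; move=> h2; nra.
rewrite big_split /= -!mulr_sumr.
by apply: lerD; apply: ler_wpM2l => //; rewrite ?hcP ?hcN.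
Qed.
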